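(* For every sufficiently large natural number $n$ and every natural number $\alpha$, there exists a set $B \subseteq \{0,1\}^n$ with $|B| \leq (2n^{13} + n^{12})\cdot 2^{\alpha}$ such that every string $y \in \{0,1\}^n$ is $\alpha$-dependent with some string $x \in B$.
   Context: $C(x)$ denotes the plain Kolmogorov complexity of the binary string $x$ with respect to a fixed universal Turing machine; $C(x \mid y)$ denotes the conditional plain Kolmogorov complexity of $x$ given $y$ with respect to a fixed universal conditional machine. A string $y$ is said to have $\alpha$-dependency with (be $\alpha$-dependent with) a string $x$ if $C(y) - C(y \mid x) \geq \alpha$ or $x = y$. *)

(* Defs.v *)
From Stdlib Require Import Cantor ClassicalEpsilon.
From mathcomp Require Import all_boot.
Set Implicit Arguments. Unset Strict Implicit. Unset Printing Implicit Defensive.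

(* A model of computation: unary partial mu-recursive functions on nat,      *)

Definition npair (a b : nat) : nat := Cantor.to_nat (a, b).
Definition nfst (x : nat) : nat := (Cantor.of_nat x).1.
Definition nsnd (x : nat) : nat := (Cantor.of_nat x).2.

Inductive code : Type :=
  | CZero
  | CSucc
  | CFst
  | CSnd
  | CPair of code & code
  | CComp of code & code
  | CRec of code & code   (* <a,0> |-> f a ; <a,m+1> |-> g <a,<m, rec <a,m>>> *)
  | CMu of code.          (* x |-> least i with f <x,i> = 0 (all earlier defined) *)

(* Fuel-bounded evaluation; [Some v] is only returned for the true value. *)
Fixpoint eval (k : nat) (c : code) (x : nat) : option nat :=
  match k with
  | 0 => None
  | k'.+1 =>
    match c with
    | CZero => Some 0
    | CSucc => Some x.+1
    | CFst => Some (nfst x)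
    | CSnd => Some (nsnd x)
    | CPair f g =>
        match eval k' f x, eval k' g x with
        | Some a, Some b => Some (npair a b)
        | _, _ => None
        end
    | CComp f g =>
        match eval k' g x with
        | Some a => eval k' f a
        | None => None
        end
    | CRec f g =>
        let a := nfst x in
        (fix r (n : nat) : option nat :=
           match n with
           | 0 => eval k' f a
           | m.+1 => match r m with
                     | Some v => eval k' g (npair a (npair m v))
                     | None => None
                     end
           end) (nsnd x)
    | CMu f =>
        (fix s (j i : nat) : option nat :=
           match j with
           | 0 => None
           | j'.+1 => match eval k' f (npair x i) with
                      | Some 0 => Some i
                      | Some _ => s j' i.+1
                      | None => None
                      end
           end) k' 0
    end
  end.

Definition halts_with (c : code) (x v : nat) : Prop := exists k, eval k c x = Some v.

(* Bijection {0,1}^* -> nat : s |-> (binary number "1s") - 1 *)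
Definition nat_of_bits (s : seq bool) : nat :=
  (foldl (fun acc (b : bool) => acc.*2 + b) 1 s).-1.

Definition outputs (U : code) (p x : seq bool) : Prop :=
  halts_with U (nat_of_bits p) (nat_of_bits x).

Definition coutputs (V : code) (p y x : seq bool) : Prop :=
  halts_with V (npair (nat_of_bits p) (nat_of_bits y)) (nat_of_bits x).

(* Additively optimal ("universal") machines, themselves computable codes. *)
Definition universal_plain (U : code) : Prop :=
  forall c : code, exists k : nat, forall p x : seq bool,
    outputs c p x -> exists2 q, outputs U q x & size q <= size p + k.

Definition universal_cond (V : code) : Prop :=
  forall c : code, exists k : nat, forall p y x : seq bool,
    coutputs c p y x -> exists2 q, coutputs V q y x & size q <= size p + k.

Definition min_length (P : seq bool -> Prop) : nat :=
  epsilon (inhabits 0)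
    (fun n => (exists p, size p = n /\ P p) /\ forall p, P p -> n <= size p).

Definition KC (U : code) (x : seq bool) : nat := min_length (fun p => outputs U p x).
Definition KCc (V : code) (x y : seq bool) : nat := min_length (fun p => coutputs V p y x).

(* y is alpha-dependent with x:  C(y) - C(y|x) >= alpha  or  x = y
   (the integer inequality C(y) - C(y|x) >= alpha is written C(y|x) + alpha <= C(y)) *)
Definition dependent (U V : code) (alpha : nat) (y x : seq bool) : Prop :=
  KCc V y x + alpha <= KC U y \/ x = y.

(* Main.v *)
Require Import Defs.
From Stdlib Require Import Cantor ClassicalEpsilon Classical.
From mathcomp Require Import all_boot.
From mathcomp Require Import zify.
Set Implicit Arguments. Unset Strict Implicit. Unset Printing Implicit Defensive.

Lemma nfst_pair a b : nfst (npair a b) = a.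
Proof. by rewrite /nfst /npair Cantor.cancel_of_to. Qed.
Lemma nsnd_pair a b : nsnd (npair a b) = b.
Proof. by rewrite /nsnd /npair Cantor.cancel_of_to. Qed.
Lemma npair_eta x : npair (nfst x) (nsnd x) = x.
Proof. by rewrite /nfst /nsnd /npair -surjective_pairing Cantor.cancel_to_of. Qed.

Fixpoint recf (ev : code -> nat -> option nat) f g a n : option nat :=
  match n with
  | 0 => ev f a
  | m.+1 => match recf ev f g a m with
            | Some v => ev g (npair a (npair m v))
            | None => None
            end
  end.

Fixpoint mus (ev : code -> nat -> option nat) f x j i : option nat :=
  match j with
  | 0 => None
  | j'.+1 => match ev f (npair x i) with
             | Some 0 => Some i
             | Some _ => mus ev f x j' i.+1
             | None => None
             end
  end.

Lemma eval_rec k f g x : eval k.+1 (CRec f g) x = recf (eval k) f g (nfst x) (nsnd x).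
Proof. rewrite /=; elim: (nsnd x) => //= n ->. done. Qed.
Lemma eval_mu k f x : eval k.+1 (CMu f) x = mus (eval k) f x k 0.
Proof. rewrite /=. generalize 0. set e := eval k. clearbody e. elim: k => //= j IH i. rewrite IH. done. Qed.

Lemma eval_pair k f g x : eval k.+1 (CPair f g) x =
  match eval k f x, eval k g x with Some a, Some b => Some (npair a b) | _, _ => None end.
Proof. reflexivity. Qed.
Lemma eval_compE k f g x : eval k.+1 (CComp f g) x =
  match eval k g x with Some a => eval k f a | None => None end.
Proof. reflexivity. Qed.

Definition evle (e1 e2 : code -> nat -> option nat) :=
  forall c x v, e1 c x = Some v -> e2 c x = Some v.

Lemma recf_mono e1 e2 f g a n v : evle e1 e2 -> recf e1 f g a n = Some v -> recf e2 f g a n = Some v.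
Proof.
move=> H; elim: n v => [|n IH] v /=; first exact: H.
case E: (recf e1 f g a n) => [w|] // Hg.
by rewrite (IH _ E); apply: H.
Qed.

Lemma mus_mono e1 e2 f x j j' i v : evle e1 e2 -> j <= j' ->
  mus e1 f x j i = Some v -> mus e2 f x j' i = Some v.
Proof.
move=> H; elim: j j' i => [|j IH] [|j'] i //= Hj.
case E: (e1 f (npair x i)) => [[|w]|] //; rewrite (H _ _ _ E) //.
exact: IH.
Qed.

Lemma eval_S k : evle (eval k) (eval k.+1).
Proof.
elim: k => [|k IH] c x v //.
case: c => [||||f g|f g|f g|f] //.
- rewrite !eval_pair.
  case E1: (eval k f x) => [a|] //; case E2: (eval k g x) => [b|] //.
  by rewrite (IH _ _ _ E1) (IH _ _ _ E2).
- rewrite !eval_compE; case E1: (eval k g x) => [a|] // H.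
  by rewrite (IH _ _ _ E1) (IH _ _ _ H).
- rewrite !eval_rec; exact: recf_mono.
- rewrite !eval_mu; apply: mus_mono => //.
Qed.

Lemma eval_le k k' c x v : k <= k' -> eval k c x = Some v -> eval k' c x = Some v.
Proof.
move=> /subnK <-; elim: (k' - k) => [|d IH] // H.
by rewrite addSn; apply: eval_S; apply: IH.
Qed.

Lemma halts_det c x v w : halts_with c x v -> halts_with c x w -> v = w.
Proof.
move=> [k1 H1] [k2 H2].
have := eval_le (leq_maxl k1 k2) H1; rewrite (eval_le (leq_maxr k1 k2) H2).
by case.
Qed.

Definition compf (c : code) (F : nat -> nat) := forall x, halts_with c x (F x).

Lemma halts_comp f g x a v : halts_with g x a -> halts_with f a v -> halts_with (CComp f g) x v.
Proof.
move=> [k1 H1] [k2 H2]; exists (maxn k1 k2).+1 => /=.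
by rewrite (eval_le (leq_maxl k1 k2) H1) (eval_le (leq_maxr k1 k2) H2).
Qed.

Lemma comp_comp f g F G : compf f F -> compf g G -> compf (CComp f g) (fun x => F (G x)).
Proof. by move=> Hf Hg x; apply: halts_comp (Hg x) (Hf _). Qed.

Lemma comp_pair f g F G : compf f F -> compf g G -> compf (CPair f g) (fun x => npair (F x) (G x)).
Proof.
move=> Hf Hg x; have [k1 H1] := Hf x; have [k2 H2] := Hg x.
exists (maxn k1 k2).+1 => /=.
by rewrite (eval_le (leq_maxl k1 k2) H1) (eval_le (leq_maxr k1 k2) H2).
Qed.

Lemma comp_zero : compf CZero (fun _ => 0). Proof. by move=> x; exists 1. Qed.
Lemma comp_succ : compf CSucc S. Proof. by move=> x; exists 1. Qed.
Lemma comp_fst : compf CFst nfst. Proof. by move=> x; exists 1. Qed.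
Lemma comp_snd : compf CSnd nsnd. Proof. by move=> x; exists 1. Qed.

Fixpoint Rf (F : nat -> nat) (G : nat -> nat) a n :=
  match n with 0 => F a | m.+1 => G (npair a (npair m (Rf F G a m))) end.

Lemma comp_rec f g F G : compf f F -> compf g G ->
  compf (CRec f g) (fun x => Rf F G (nfst x) (nsnd x)).
Proof.
move=> Hf Hg x.
suff [k Hk] : exists k, recf (eval k) f g (nfst x) (nsnd x) = Some (Rf F G (nfst x) (nsnd x)).
  by exists k.+1; rewrite eval_rec.
elim: (nsnd x) => [|n [k IH]] /=; first by have [k Hk] := Hf (nfst x); exists k.
have [k2 H2] := Hg (npair (nfst x) (npair n (Rf F G (nfst x) n))).
exists (maxn k k2).
rewrite (recf_mono (f:=f) (g:=g) (a:=nfst x) (n:=n) (e1 := eval k) _ IH).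
  exact: eval_le (leq_maxr _ _) H2.
move=> c y v; exact: eval_le (leq_maxl _ _).
Qed.

Lemma comp_mu f F x i0 : compf f F -> F (npair x i0) = 0 ->
  (forall i, i < i0 -> F (npair x i) <> 0) -> halts_with (CMu f) x i0.
Proof.
move=> Hf H0 Hlt.
have [K HK] : exists K, forall i, i <= i0 -> eval K f (npair x i) = Some (F (npair x i)).
  elim: i0 {H0 Hlt} => [|m [K HK]].
    have [k Hk] := Hf (npair x 0); exists k => i; rewrite leqn0 => /eqP ->; done.
  have [k Hk] := Hf (npair x m.+1); exists (maxn K k) => i.
  rewrite leq_eqVlt => /orP [/eqP ->|Hi]; first exact: eval_le (leq_maxr _ _) Hk.
  exact: eval_le (leq_maxl _ _) (HK _ Hi).
exists (maxn K i0.+1).+1; rewrite eval_mu.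
have HK' i : i <= i0 -> eval (maxn K i0.+1) f (npair x i) = Some (F (npair x i)).
  by move=> Hi; apply: eval_le (leq_maxl _ _) (HK _ Hi).
have Hj : i0.+1 <= maxn K i0.+1 by apply: leq_maxr.
suff : forall d i j, i + d = i0 -> d < j -> mus (eval (maxn K i0.+1)) f x j i = Some i0.
  move=> /(_ i0 0 (maxn K i0.+1)); apply => //.
elim=> [|d IH] i [|j] //= Hid Hdj.
  rewrite addn0 in Hid; subst; by rewrite HK' // H0.
rewrite HK'; last by rewrite -Hid leq_addr.
case E: (F (npair x i)) => [|w].
  by exfalso; apply: (Hlt i) => //; rewrite -Hid -addn1 leq_add2l.
apply: IH => //; by rewrite addSnnS.
Qed.
Lemma comp_ext c F G : compf c F -> (forall x, F x = G x) -> compf c G.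
Proof. by move=> H E x; rewrite -E. Qed.

Lemma halts_pair f g x a b : halts_with f x a -> halts_with g x b -> halts_with (CPair f g) x (npair a b).
Proof.
move=> [k1 H1] [k2 H2]; exists (maxn k1 k2).+1; rewrite eval_pair.
by rewrite (eval_le (leq_maxl k1 k2) H1) (eval_le (leq_maxr k1 k2) H2).
Qed.

Definition ID := CPair CFst CSnd.
Lemma comp_id : compf ID id.
Proof. apply: comp_ext (comp_pair comp_fst comp_snd) _ => x; exact: npair_eta. Qed.

Definition SS := CComp CSnd CSnd.
Lemma comp_SS : compf SS (fun x => nsnd (nsnd x)).
Proof. exact: comp_comp comp_snd comp_snd. Qed.

Definition ADDc := CRec ID (CComp CSucc SS).
Lemma comp_add : compf ADDc (fun x => nfst x + nsnd x).
Proof.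
apply: comp_ext (comp_rec comp_id (comp_comp comp_succ comp_SS)) _ => x.
elim: (nsnd x) => [|n IH] /=; first by rewrite addn0.
by rewrite !nsnd_pair IH addnS.
Qed.

Definition PREDc := CComp (CRec CZero (CComp CFst CSnd)) (CPair CZero ID).
Lemma comp_pred : compf PREDc (fun x => x.-1).
Proof.
apply: comp_ext (comp_comp (comp_rec comp_zero (comp_comp comp_fst comp_snd)) (comp_pair comp_zero comp_id)) _ => x /=.
rewrite nfst_pair nsnd_pair; case: x => //= n; by rewrite nsnd_pair nfst_pair.
Qed.

Definition SUBc := CRec ID (CComp PREDc SS).
Lemma comp_sub : compf SUBc (fun x => nfst x - nsnd x).
Proof.
apply: comp_ext (comp_rec comp_id (comp_comp comp_pred comp_SS)) _ => x.
elim: (nsnd x) => [|n IH] /=; first by rewrite subn0.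
by rewrite !nsnd_pair IH subnS.
Qed.

Definition MULc := CRec CZero (CComp ADDc (CPair SS CFst)).
Lemma comp_mul : compf MULc (fun x => nfst x * nsnd x).
Proof.
apply: comp_ext (comp_rec comp_zero (comp_comp comp_add (comp_pair comp_SS comp_fst))) _ => x.
elim: (nsnd x) => [|n IH] /=; first by rewrite muln0.
by rewrite !nfst_pair !nsnd_pair IH mulnS addnC.
Qed.

Definition POW2c := CComp (CRec (CComp CSucc CZero) (CComp ADDc (CPair SS SS))) (CPair CZero ID).
Lemma comp_pow2 : compf POW2c (fun x => 2 ^ x).
Proof.
apply: comp_ext (comp_comp (comp_rec (comp_comp comp_succ comp_zero) (comp_comp comp_add (comp_pair comp_SS comp_SS))) (comp_pair comp_zero comp_id)) _ => x /=.
rewrite nfst_pair nsnd_pair; elim: x => [|n IH] //=.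
by rewrite !nsnd_pair IH expnS nfst_pair mul2n addnn.
Qed.

Definition LOGf := CComp SUBc (CPair (CComp CSucc CFst) (CComp POW2c (CComp CSucc CSnd))).
Lemma comp_logf : compf LOGf (fun x => (nfst x).+1 - 2 ^ (nsnd x).+1).
Proof.
apply: comp_ext (comp_comp comp_sub (comp_pair (comp_comp comp_succ comp_fst) (comp_comp comp_pow2 (comp_comp comp_succ comp_snd)))) _ => x /=.
by rewrite nfst_pair nsnd_pair.
Qed.

Definition LOG2c := CMu LOGf.
Lemma halts_log2 Z n : 2 ^ n <= Z -> Z < 2 ^ n.+1 -> halts_with LOG2c Z n.
Proof.
move=> H1 H2; apply: comp_mu comp_logf _ _.
  by rewrite nfst_pair nsnd_pair; apply/eqP; rewrite subn_eq0.
move=> i Hi; rewrite nfst_pair nsnd_pair; apply/eqP; rewrite subn_eq0 -ltnNge ltnS.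
apply: leq_trans H1; rewrite leq_exp2l //.
Qed.

Definition stepb (acc : nat) (b : bool) := acc.*2 + b.
Definition F0 (a : nat) (s : seq bool) := foldl stepb a s.

Lemma F0_split a s : F0 a s = a * 2 ^ size s + F0 0 s.
Proof.
elim: s a => [|b s IH] a /=; first by rewrite muln1 addn0.
rewrite /F0 /= -!/(F0 _ _) IH (IH (stepb 0 b)) /stepb /= expnS.
rewrite -!muln2 /=. nia.
Qed.

Lemma F0_lt s : F0 0 s < 2 ^ size s.
Proof.
elim: s => [|b s IH] //=.
rewrite /F0 /= -/(F0 _ _) F0_split /stepb expnS; case: b => /=; nia.
Qed.

Lemma val_eq s : F0 1 s = 2 ^ size s + F0 0 s.
Proof. by rewrite F0_split mul1n. Qed.

Lemma bits_val s : nat_of_bits s = (F0 1 s).-1.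
Proof. by []. Qed.

Lemma val_bounds s : 2 ^ size s <= F0 1 s < 2 ^ (size s).+1.
Proof. rewrite val_eq expnS; have := F0_lt s; lia. Qed.

Lemma bits_cat q s : nat_of_bits (q ++ s) = nat_of_bits q * 2 ^ size s + nat_of_bits s.
Proof.
rewrite !bits_val /F0 foldl_cat -/(F0 _ _) -!/(F0 1 _) F0_split (val_eq s).
have := val_bounds q; have : 0 < 2 ^ size s by rewrite expn_gt0.
move: (F0 1 q) (2 ^ size s) => a b; nia.
Qed.

Lemma F0_nseq0 r : F0 0 (nseq r false) = 0.
Proof. by elim: r. Qed.

Lemma val_pad r q : F0 1 (nseq r false ++ true :: q) = 2 ^ (r + (size q).+1) + F0 1 q.
Proof.
rewrite val_eq size_cat size_nseq /=; congr (_ + _).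
by rewrite /F0 foldl_cat -/(F0 0 _) F0_nseq0.
Qed.

Lemma log_uniq a b V : 2 ^ a <= V < 2 ^ a.+1 -> 2 ^ b <= V < 2 ^ b.+1 -> a = b.
Proof.
move=> /andP[a1 a2] /andP[b1 b2].
case: (ltngtP a b) => // H.
- have : 2 ^ a.+1 <= 2 ^ b by rewrite leq_exp2l.
  lia.
- have : 2 ^ b.+1 <= 2 ^ a by rewrite leq_exp2l.
  lia.
Qed.

Lemma F00_inj s1 s2 : size s1 = size s2 -> F0 0 s1 = F0 0 s2 -> s1 = s2.
Proof.
elim: s1 s2 => [|b1 s1 IH] [|b2 s2] //= [Hs].
rewrite (F0_split (stepb 0 b1)) (F0_split (stepb 0 b2)) /stepb -Hs.
have := F0_lt s1; have := F0_lt s2; rewrite -Hs.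
move: (2 ^ size s1) => M.
case: b1; case: b2 => /= h1 h2 E.
- by rewrite (IH s2) //; lia.
- lia.
- lia.
- by rewrite (IH s2) //; lia.
Qed.

Lemma bits_inj s1 s2 : nat_of_bits s1 = nat_of_bits s2 -> s1 = s2.
Proof.
rewrite !bits_val => E.
have h1 := val_bounds s1; have h2 := val_bounds s2.
have E' : F0 1 s1 = F0 1 s2 by move: E h1 h2; move: (F0 1 s1) (F0 1 s2) => a b;
  have := expn_gt0 2 (size s1); have := expn_gt0 2 (size s2); lia.
have Hs : size s1 = size s2 by apply: (log_uniq h1); rewrite E'.
apply: F00_inj => //; move: E'; rewrite !val_eq Hs; lia.
Qed.

Lemma bits_lt s A : size s < A -> nat_of_bits s < 2 ^ A.
Proof.
move=> H; rewrite bits_val; have /andP[_ h] := val_bounds s.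
have : 2 ^ (size s).+1 <= 2 ^ A by rewrite leq_exp2l.
lia.
Qed.

Lemma halts_compf f g x a F : halts_with g x a -> compf f F -> halts_with (CComp f g) x (F a).
Proof. by move=> H Hf; apply: halts_comp H (Hf a). Qed.

Definition Mc := CComp LOG2c (CComp CSucc CFst).
Definition Tc := CComp LOG2c (CComp CSucc CSnd).
Definition Qc := CComp SUBc (CPair (CComp SUBc (CPair (CComp CSucc CSnd) (CComp POW2c Tc))) (CComp CSucc CZero)).
Definition Hc := CComp ADDc (CPair (CComp MULc (CPair Qc (CComp POW2c Mc))) CFst).

Lemma halts_Hc r q s :
  halts_with Hc (npair (nat_of_bits s) (nat_of_bits (nseq r false ++ true :: q))) (nat_of_bits (q ++ s)).
Proof.
set x := nseq r false ++ true :: q.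
set z := npair _ _.
have hM : halts_with Mc z (size s).
  apply: (halts_comp (a := (nat_of_bits s).+1)).
    by have := halts_compf (comp_fst z) comp_succ; rewrite nfst_pair.
  apply: halts_log2; rewrite bits_val; have := val_bounds s; have := expn_gt0 2 (size s);
  move: (F0 1 s) (2 ^ size s) => a b; lia.
have hT : halts_with Tc z (size x).
  apply: (halts_comp (a := (nat_of_bits x).+1)).
    by have := halts_compf (comp_snd z) comp_succ; rewrite nsnd_pair.
  apply: halts_log2; rewrite bits_val; have := val_bounds x; have := expn_gt0 2 (size x);
  move: (F0 1 x) (2 ^ size x) => a b; lia.
have hQ : halts_with Qc z (nat_of_bits q).
  have := halts_compf (halts_pair (halts_compf (halts_pair (halts_compf (comp_snd z) comp_succ) (halts_compf hT comp_pow2)) comp_sub) (halts_compf (comp_zero z) comp_succ)) comp_sub.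
  rewrite !nfst_pair !nsnd_pair.
  have -> : size x = r + (size q).+1 by rewrite /x size_cat size_nseq.
  suff -> : (nat_of_bits x).+1 - 2 ^ (r + (size q).+1) - 1 = nat_of_bits q by [].
  rewrite !bits_val /x val_pad; have := val_bounds q; have := expn_gt0 2 (size q).
  move: (F0 1 q) (2 ^ size q) (2 ^ (r + (size q).+1)) (2 ^ (size q).+1) => a b c d; lia.
have := halts_compf (halts_pair (halts_compf (halts_pair hQ (halts_compf hM comp_pow2)) comp_mul) (comp_fst z)) comp_add.
by rewrite !nfst_pair !nsnd_pair bits_cat.
Qed.

Lemma ex_min (Q : nat -> Prop) n : Q n -> exists m, Q m /\ forall k, Q k -> m <= k.
Proof.
elim/ltn_ind: n => n IH Qn.
case: (classic (exists k, k < n /\ Q k)) => [[k [hk Qk]]|H]; first exact: IH hk Qk.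
exists n; split => // k Qk; rewrite leqNgt; apply/negP => hk; apply: H; by exists k.
Qed.

Lemma ml_spec (P : seq bool -> Prop) p : P p ->
  (exists p0, size p0 = min_length P /\ P p0) /\ forall p', P p' -> min_length P <= size p'.
Proof.
move=> Pp; rewrite /min_length.
apply: (epsilon_spec (inhabits 0) (fun n => (exists p, size p = n /\ P p) /\ forall p, P p -> n <= size p)).
have [m [[p0 [h1 h2]] hm]] := ex_min (Q := fun n => exists p, size p = n /\ P p) (ex_intro _ p (conj erefl Pp)).
exists m; split; first by exists p0.
move=> p' Pp'; apply: hm; by exists p'.
Qed.

Lemma outputs_ex U (hU : universal_plain U) y : exists p, outputs U p y.
Proof.
have [k Hk] := hU ID.
have [q Hq _] := Hk y y (comp_id (nat_of_bits y)).
by exists q.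
Qed.

Definition DEC U := CComp U Hc.

Definition pad n L (q : seq bool) := nseq (n - L.+1) false ++ true :: q.

Unset Implicit Arguments.
Theorem theorem6 (U V : code) (hU : universal_plain U) (hV : universal_cond V) :
  exists N : nat, forall n : nat, N <= n -> forall alpha : nat,
    exists B : {set n.-tuple bool},
      #|B| <= (2 * n ^ 13 + n ^ 12) * 2 ^ alpha /\
      forall y : n.-tuple bool, exists2 x, x \in B & dependent U V alpha (val y) (val x).
Proof.
have [kc Hkc] := hV (DEC U).
exists (2 ^ kc.+1) => n Hn alpha.
have npos : 0 < n by apply: leq_trans Hn; rewrite expn_gt0.
have Hbig : 2 ^ kc.+1 * 2 ^ alpha <= (2 * n ^ 13 + n ^ 12) * 2 ^ alpha.
  rewrite leq_mul2r; apply/orP; right.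
  apply: leq_trans Hn _; apply: leq_trans (leq_addl _ _).
  by rewrite -{1}(expn1 n) leq_pexp2l.
case: (leqP n (alpha + kc)) => Hcase.
  exists setT; split.
    rewrite cardsT card_tuple card_bool.
    apply: leq_trans Hbig; rewrite -expnD leq_exp2l //; lia.
  by move=> y; exists y => //; right.
set L := alpha + kc.
set S := [set y : n.-tuple bool | KC U (val y) < L].
pose y0 := [tuple of nseq n false].
pose f := fun q : L.-tuple bool => (insubd y0 (pad n L q) : n.-tuple bool).
set T := [set f q | q in setT].
have Hpad q : size q = L -> size (pad n L q) = n.
  by move=> hq; rewrite /pad size_cat size_nseq /= hq; lia.
have Hf q : val (f q) = pad n L q.
  by rewrite /f val_insubd Hpad ?size_tuple // eqxx.
exists (S :|: T); split.
  have hT : #|T| <= 2 ^ L.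
    apply: leq_trans (leq_imset_card _ _) _; by rewrite cardsT card_tuple card_bool.
  have hS : #|S| <= 2 ^ L.
    pose prog (y : n.-tuple bool) := epsilon (inhabits [::])
       (fun p => outputs U p (val y) /\ size p = KC U (val y)).
    have Hprog y : outputs U (prog y) (val y) /\ size (prog y) = KC U (val y).
      apply: (epsilon_spec (inhabits [::]) (fun p => outputs U p (val y) /\ size p = KC U (val y))); have [p Hp] := outputs_ex hU (val y).
      have [[p0 [h1 h2]] _] := ml_spec (P := fun p => outputs U p (val y)) Hp; by exists p0.
    pose g y : 'I_((2 ^ L).-1.+1) := inord (nat_of_bits (prog y)).
    suff : #|S| <= #|'I_((2 ^ L).-1.+1)| by rewrite card_ord prednK ?expn_gt0.
    apply: (@leq_card_in _ _ g (mem S)).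
    move=> y1 y2; rewrite !inE => h1 h2 /(congr1 val).
    have [o1 s1] := Hprog y1; have [o2 s2] := Hprog y2.
    have e1 : nat_of_bits (prog y1) < (2 ^ L).-1.+1 by rewrite prednK ?expn_gt0 // bits_lt // s1.
    have e2 : nat_of_bits (prog y2) < (2 ^ L).-1.+1 by rewrite prednK ?expn_gt0 // bits_lt // s2.
    rewrite /g /= (inordK e1) (inordK e2).
    move/bits_inj => E; rewrite /outputs E in o1.
    by move/bits_inj: (halts_det o1 o2) => /val_inj.
  apply: leq_trans (leq_card_setU S T) _.
  apply: leq_trans Hbig.
  have -> : 2 ^ kc.+1 * 2 ^ alpha = 2 ^ L + 2 ^ L by rewrite addnn -mul2n -expnS /L -expnD; congr (2 ^ _); lia.
  exact: leq_add.
move=> y.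
case: (ltnP (KC U (val y)) L) => hy.
  by exists y; [rewrite in_setU inE hy | right].
have [po Hpo] := outputs_ex hU (val y).
have [[ps [hps ops]] _] := ml_spec (P := fun p => outputs U p (val y)) Hpo.
set k := KC U (val y) in hy hps.
have hq : size (take L ps) = L by rewrite size_take hps; case: ltngtP hy; lia.
pose qt : L.-tuple bool := insubd [tuple of nseq L false] (take L ps).
have hqt : val qt = take L ps by rewrite val_insubd hq eqxx.
exists (f qt); first by rewrite in_setU; apply/orP; right; apply: imset_f.
left.
have hc : coutputs (DEC U) (drop L ps) (val (f qt)) (val y).
  rewrite /coutputs Hf /pad hqt; apply: halts_comp (halts_Hc _ _ _) _.
  by rewrite cat_take_drop.
have [q' hq' sq'] := Hkc _ _ _ hc.
have [_ hm] := ml_spec (P := fun p => coutputs V p (val (f qt)) (val y)) hq'.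
have := hm _ hq'; rewrite size_drop hps in sq'; change (is_true (size q' <= KC U (val y) - L + kc)) in sq'.
move=> H; have H' : KCc V (val y) (val (f qt)) <= size q' := H.
change (is_true (L <= KC U (val y))) in hy.
change (is_true (KCc V (val y) (val (f qt)) + alpha <= KC U (val y))).
move: sq' hy H'; rewrite /L; lia.
Qed.
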